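(* (i) $\lim_{n\to\infty}\zeta^{\star}(2,\{1\}^n)=+\infty$. (ii) For integers $r\geq1$, $k_1\geq2$, $k_2,\ldots,k_r\geq1$, \[ \lim_{n\to\infty}\zeta^{\star}(k_1,\ldots,k_{r-1},k_r+1,\{1\}^n)=\zeta^{\star}(k_1,\ldots,k_{r-1},k_r),\qquad \lim_{n\to\infty}\zeta^{\star}(k_1,\ldots,k_{r-1},k_r,n)=\zeta^{\star}(k_1,\ldots,k_{r-1},k_r). \]
   Context: $\zeta^{\star}(k_1,\ldots,k_r)=\sum_{n_1\geq\cdots\geq n_r\geq 1}\frac{1}{n_1^{k_1}\cdots n_r^{k_r}}$ for $k_1\geq2$, $k_2,\ldots,k_r\geq1$; $\{1\}^n$ denotes $n$ consecutive arguments equal to $1$. *)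

(* Defs.v *)
From HB Require Import structures.
From mathcomp Require Import all_boot all_order all_algebra.
From mathcomp Require Import all_classical all_reals all_analysis.
Import numFieldNormedType.Exports.
Set Implicit Arguments. Unset Strict Implicit. Unset Printing Implicit Defensive.
Import Order.TTheory GRing.Theory Num.Theory.
Local Open Scope ring_scope.

(* Truncated multiple zeta-star sum:
   zstar_trunc N [:: k_1; ...; k_r]
     = \sum_{N >= n_1 >= n_2 >= ... >= n_r >= 1} 1/(n_1^k_1 ... n_r^k_r),
   with the empty product equal to 1. *)
Fixpoint zstar_trunc (R : realType) (N : nat) (ks : seq nat) : R :=
  match ks with
  | [::] => 1
  | k :: ks' => \sum_(1 <= m < N.+1) ((m%:R : R) ^+ k)^-1 * zstar_trunc R m ks'
  end.

Definition zeta_star (R : realType) (ks : seq nat) : R :=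
  limn (fun N => zstar_trunc R N ks).

Definition admissible (ks : seq nat) : bool :=
  match ks with
  | [::] => false
  | k1 :: rest => (2 <= k1)%N && all (fun k => (1 <= k)%N) rest
  end.

(* Main.v *)
Require Import Defs.
From HB Require Import structures.
From mathcomp Require Import all_boot all_order all_algebra.
From mathcomp Require Import all_classical all_reals all_analysis.
From mathcomp Require Import ring lra.
Import Order.TTheory GRing.Theory Num.Theory.
Import numFieldNormedType.Exports.
Local Open Scope ring_scope.
Local Open Scope classical_set_scope.

Section Aux.
Variable R : realType.
Local Notation Z N s := (zstar_trunc R N s).

Lemma ZS N k s : Z N.+1 (k::s) = Z N (k::s) + ((N.+1%:R)^+k)^-1 * Z N.+1 s.
Proof. by rewrite /= big_nat_recr. Qed.

Lemma Z0 k s : Z 0 (k::s) = 0.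
Proof. by rewrite /= big_geq. Qed.

Lemma Z1 k s : Z 1 (k::s) = Z 1 s.
Proof. by rewrite /= big_nat1 expr1n invr1 mul1r. Qed.

Lemma Z_ge0 N s : 0 <= Z N s.
Proof.
elim: s N => [|k s IH] N /=; first exact: ler01.
by apply: sumr_ge0 => i _; apply: mulr_ge0; rewrite ?invr_ge0 ?exprn_ge0 ?IH.
Qed.

Lemma Z_nd s : nondecreasing_seq (fun N => Z N s).
Proof.
apply/nondecreasing_seqP => N; case: s => [|k s] //.
by rewrite ZS lerDl; apply: mulr_ge0; rewrite ?invr_ge0 ?exprn_ge0 ?Z_ge0.
Qed.

Lemma Z_monoN s N M : (N <= M)%N -> Z N s <= Z M s.
Proof. exact: Z_nd. Qed.

Lemma Z_lift (ks u v : seq nat) (c : R) : 0 <= c ->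
  (forall m, Z m u <= c * Z m v) -> forall N, Z N (ks ++ u) <= c * Z N (ks ++ v).
Proof.
move=> c0 H; elim: ks => [|k ks IH] //= N.
rewrite mulr_sumr; apply: ler_sum => i _.
by rewrite mulrCA; apply: ler_wpM2l; [rewrite invr_ge0 exprn_ge0|].
Qed.

Lemma Z_eq (ks u v : seq nat) :
  (forall m, Z m u = Z m v) -> forall N, Z N (ks ++ u) = Z N (ks ++ v).
Proof.
move=> H; elim: ks => [|k ks IH] //= N.
by apply: eq_bigr => i _; rewrite IH.
Qed.

Lemma Z_inner (k k' : nat) a b (c : R) :
  (forall j, (1 <= j)%N -> ((j%:R)^+k)^-1 * Z j a <= c * (((j%:R)^+k')^-1 * Z j b)) ->
  forall m, Z m (k::a) <= c * Z m (k'::b).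
Proof.
move=> H m /=; rewrite mulr_sumr; apply: ler_sum_nat => i /andP[hi _].
exact: H.
Qed.

Lemma g1 n : Z 1 (nseq n 1%N) = 1.
Proof. by elim: n => [|n IH] //; rewrite -[nseq n.+1 _]/(1%N :: nseq n 1%N) Z1 IH. Qed.

Lemma g_le n j : (1 <= j)%N -> Z j (nseq n 1%N) <= j%:R.
Proof.
elim: n j => [|n IH] j hj /=; first by rewrite ler1n.
apply: (@le_trans _ _ (\sum_(1 <= m < j.+1) (1:R))).
  apply: ler_sum_nat => m /andP[h1 _]; rewrite expr1 mulrC.
  by rewrite ler_pdivrMr ?mul1r ?IH // ltr0n.
by rewrite sumr_const_nat subn1 /=.
Qed.

Lemma g_monon n j : (1 <= j)%N -> Z j (nseq n 1%N) <= Z j (nseq n.+1 1%N).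
Proof.
elim: n j => [|n IH] j hj.
  have H := Z_monoN [:: 1%N] 1 j hj; have E : Z 1 [:: 1%N] = 1 := g1 1.
  by rewrite E in H; exact: H.
rewrite -[X in _ <= X]mul1r.
apply: (@Z_inner 1 1 (nseq n 1%N) (nseq n.+1 1%N) 1) => // i hi; rewrite mul1r.
by apply: ler_wpM2l; [rewrite invr_ge0 exprn_ge0|exact: IH].
Qed.

End Aux.

Section Aux2.
Variable R : realType.
Local Notation Z N s := (zstar_trunc R N s).

Definition T n N : R := \sum_(1 <= m < N.+1) ((m%:R * (m.+1)%:R)^-1 * Z m (nseq n 1%N)).

Lemma T_id n N : T n.+1 N + Z N (nseq n.+1 1%N) / (N.+1)%:R = Z N (2%N :: nseq n 1%N).
Proof.
elim: N => [|N IH].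
  by rewrite /T /= !big_geq // mul0r add0r.
have E1 : T n.+1 N.+1 = T n.+1 N + ((N.+1%:R * N.+2%:R)^-1 * Z N.+1 (nseq n.+1 1%N)).
  by rewrite /T big_nat_recr.
have E2 : Z N.+1 (nseq n.+1 1%N) = Z N (nseq n.+1 1%N) + ((N.+1%:R)^+1)^-1 * Z N.+1 (nseq n 1%N).
  exact: ZS.
have E3 : Z N.+1 (2%N :: nseq n 1%N) = Z N (2%N :: nseq n 1%N) + ((N.+1%:R)^+2)^-1 * Z N.+1 (nseq n 1%N).
  exact: ZS.
rewrite E1 E3 -IH E2.
have -> : (N.+2%:R : R) = N.+1%:R + 1 by rewrite -natr1.
have hx : (0:R) < N.+1%:R by rewrite ltr0n.
set x := (N.+1%:R : R) in hx *.
have hx1 : x + 1 != 0 by rewrite gt_eqF // ltr_wpDr.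
have hx0 : x != 0 by rewrite gt_eqF.
by clearbody x; field; rewrite hx1 hx0.
Qed.

Lemma T0_id N : T 0 N + 1 / (N.+1)%:R = 1.
Proof.
elim: N => [|N IH].
  by rewrite /T big_geq // add0r divr1.
have E1 : T 0 N.+1 = T 0 N + ((N.+1%:R * N.+2%:R)^-1 * 1).
  by rewrite /T big_nat_recr.
rewrite E1 -[in RHS]IH.
have -> : (N.+2%:R : R) = N.+1%:R + 1 by rewrite -natr1.
have hx : (0:R) < N.+1%:R by rewrite ltr0n.
set x := (N.+1%:R : R) in hx *.
have hx1 : x + 1 != 0 by rewrite gt_eqF // ltr_wpDr.
have hx0 : x != 0 by rewrite gt_eqF.
by clearbody x; field; rewrite hx1 hx0.
Qed.

Lemma inv_sq_le (x : R) : 1 <= x -> (x ^+ 2)^-1 <= 2 * (x * (x + 1))^-1.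
Proof.
move=> hx; have hx0 : x != 0 by rewrite gt_eqF //; lra.
have hx1 : x + 1 != 0 by rewrite gt_eqF //; lra.
rewrite -subr_ge0.
have -> : 2 * (x * (x + 1))^-1 - (x ^+ 2)^-1 = (x - 1) / (x ^+ 2 * (x + 1)).
  by field; rewrite hx0 hx1.
apply: divr_ge0; first by rewrite subr_ge0.
by apply: mulr_ge0; [exact: sqr_ge0| lra].
Qed.

Lemma S_le2T n N : Z N (2%N :: nseq n 1%N) <= 2 * T n N.
Proof.
rewrite /= /T mulr_sumr; apply: ler_sum_nat => m /andP[hm _].
rewrite mulrA; apply: ler_wpM2r; first exact: Z_ge0.
rewrite -[m.+1%:R]natr1; apply: inv_sq_le; by rewrite ler1n.
Qed.

Lemma S_bound n N : Z N (2%N :: nseq n 1%N) <= 2 ^+ n.+1.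
Proof.
elim: n N => [|n IH] N.
  apply: (le_trans (S_le2T 0 N)); rewrite expr1.
  have -> : T 0 N = 1 - 1 / (N.+1%:R) by rewrite -{1}(T0_id N) addrK.
  rewrite mulrBr mulr1 lerBlDr lerDl; apply: mulr_ge0 => //.
apply: (le_trans (S_le2T n.+1 N)); rewrite exprS.
apply: ler_wpM2l => //; apply: le_trans (IH N).
rewrite -T_id lerDl; apply: divr_ge0; [exact: Z_ge0| exact: ler0n].
Qed.

End Aux2.

Section Aux3.
Variable R : realType.
Local Notation Z N s := (zstar_trunc R N s).

Lemma Z_expo s s' : all2 (fun a b => (b <= a)%N) s s' -> forall N, Z N s <= Z N s'.
Proof.
elim: s s' => [|k s IH] [|k' s'] //= /andP[hk H] N.
apply: ler_sum_nat => i /andP[hi _].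
apply: ler_pM; rewrite ?invr_ge0 ?exprn_ge0 ?Z_ge0 ?IH //.
rewrite lef_pV2 ?posrE ?exprn_gt0 ?ltr0n //.
by apply: ler_weXn2l; rewrite ?ler1n.
Qed.

Lemma all2_nseq (rest : seq nat) : all (fun k => (1 <= k)%N) rest ->
  all2 (fun a b => (b <= a)%N) rest (nseq (size rest) 1%N).
Proof. by elim: rest => [|k rest IH] //= /andP[-> /IH]. Qed.

Lemma adm_bound s : admissible s -> exists B : R, forall N, Z N s <= B.
Proof.
case: s => [|k rest] //; rewrite /admissible => /andP[hk hr].
exists (2 ^+ (size rest).+1) => N.
apply: le_trans (S_bound R (size rest) N).
apply: Z_expo; rewrite /= hk; exact: all2_nseq.
Qed.

Lemma bnd_cvg (u : nat -> R) (B : R) : nondecreasing_seq u -> (forall N, u N <= B) ->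
  cvgn u.
Proof.
move=> nd hB; apply: nondecreasing_is_cvgn => //.
by exists B => _ [n _ <-].
Qed.

Lemma bnd_le_lim (u : nat -> R) (B : R) : nondecreasing_seq u -> (forall N, u N <= B) ->
  forall N, u N <= limn u.
Proof. by move=> nd hB; apply: nondecreasing_cvgn_le => //; exact: bnd_cvg hB. Qed.

Lemma bnd_lim_le (u : nat -> R) (B : R) : nondecreasing_seq u -> (forall N, u N <= B) ->
  limn u <= B.
Proof.
move=> nd hB; apply: limr_le; first exact: bnd_cvg hB.
by apply: nearW.
Qed.

Lemma aux_ineq (x A Bv P : R) : 1 <= x -> 0 <= P -> x - A <= 3/4 * P ->
  x + 1 - Bv <= 3 * P -> x + 1 - (A + (x+1)^-1 * Bv) <= 9/4 * P.
Proof.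
move=> hx hP h1 h2.
have hx1 : x + 1 != 0 by rewrite gt_eqF //; lra.
have -> : (x+1)^-1 * Bv = 1 - (x + 1 - Bv) / (x + 1) by field.
have : (x + 1 - Bv) / (x + 1) <= 3/2 * P.
  rewrite ler_pdivrMr; last lra.
  nra.
lra.
Qed.

Lemma d_bound n j : (1 <= j)%N -> j%:R - Z j (nseq n 1%N) <= 3^+j * (3/4)^+n.
Proof.
elim: n j => [|n IHn] j hj.
  rewrite expr0 mulr1.
  have : j%:R <= (3:R)^+j by rewrite -natrX ler_nat ltnW // ltn_expl.
  rewrite /=; lra.
elim: j hj => [//|j IHj] _.
case: j IHj => [_|j IHj].
  rewrite g1 subrr; apply: mulr_ge0; apply: exprn_ge0 => //; lra.
have E := ZS R j.+1 1 (nseq n 1%N).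
change (Z j.+2 (nseq n.+1 1%N)) with (Z j.+2 (1%N :: nseq n 1%N)).
rewrite E expr1.
have h1 := IHj isT.
have h2 := IHn j.+2 isT.
have -> : (3:R) ^+ j.+2 * (3 / 4) ^+ n.+1 = 9/4 * (3 ^+ j.+1 * (3/4)^+n).
  by rewrite !exprS; field.
rewrite -[j.+2%:R]natr1.
apply: aux_ineq => //.
- by rewrite ler1n.
- by move: h1; rewrite [(3/4)^+n.+1]exprS mulrCA.
- by move: h2; rewrite -natr1 [3 ^+ j.+2]exprS mulrA.
Qed.

End Aux3.

Section Aux4.
Lemma Zcons (R : realType) N k s : zstar_trunc R N (k :: s) = \sum_(1 <= m < N.+1) ((m%:R)^+k)^-1 * zstar_trunc R m s.
Proof. by []. Qed.
Variable R : realType.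
Local Notation Z N s := (zstar_trunc R N s).

Lemma Zzero j : Z j [:: 0%N] = j%:R.
Proof.
rewrite /=; under eq_bigr do rewrite expr0 invr1 mulr1.
by rewrite sumr_const_nat subn1.
Qed.

Lemma g_cvg j : (1 <= j)%N ->
  (fun n => Z j (nseq n 1%N)) @ \oo --> Z j [:: 0%N].
Proof.
move=> hj; rewrite Zzero.
have Hq : (fun n => (3/4:R)^+n) @ \oo --> 0.
  by apply: cvg_expr; rewrite ger0_norm; lra.
have Hf : (fun n => j%:R - 3^+j * (3/4:R)^+n) @ \oo --> (j%:R : R).
  rewrite -[X in _ --> X]subr0 -[X in _ - X](mulr0 (3^+j : R)).
  apply: cvgB; first exact: cvg_cst.
  exact: cvgMl_tmp.
apply: (squeeze_cvgr _ Hf (cvg_cst _)).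
apply: nearW => n; apply/andP; split.
  by have := d_bound R n j hj; lra.
exact: g_le.
Qed.

Lemma lim_step k (a : nat -> seq nat) b :
  (forall j, (1 <= j)%N -> (fun n => Z j (a n)) @ \oo --> Z j b) ->
  forall N, (fun n => Z N (k :: a n)) @ \oo --> Z N (k :: b).
Proof.
move=> H; elim => [|N IH].
  have -> : (fun n => Z 0 (k :: a n)) = fun=> 0 by apply/funext => n; rewrite Z0.
  rewrite Z0; exact: cvg_cst.
have -> : (fun n => Z N.+1 (k :: a n)) =
    (fun n => Z N (k :: a n)) + (fun n => ((N.+1%:R)^+k)^-1 * Z N.+1 (a n)).
  by apply/funext => n; rewrite ZS.
rewrite ZS; apply: cvgD => //.
apply: cvgMl_tmp; exact: H.
Qed.

Lemma lim_lift ks k (a : nat -> seq nat) b :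
  (forall j, (1 <= j)%N -> (fun n => Z j (a n)) @ \oo --> Z j b) ->
  forall N, (fun n => Z N (ks ++ k :: a n)) @ \oo --> Z N (ks ++ k :: b).
Proof.
move=> H; elim: ks => [|k' ks IH] N; first exact: lim_step.
exact: (@lim_step k' (fun n => ks ++ k :: a n) (ks ++ k :: b) (fun j _ => IH j)).
Qed.

Lemma Zn_ge1 j n : (1 <= j)%N -> 1 <= Z j [:: n].
Proof.
move=> hj; have := Z_monoN R [:: n] 1 j hj.
by rewrite Z1.
Qed.

Lemma Zsplit j n : Z j.+1 [:: n] = 1 + \sum_(2 <= m < j.+2) ((m%:R)^+n)^-1 * Z m [::].
Proof. by rewrite Zcons big_ltn // expr1n invr1 mul1r. Qed.

Lemma e_step n j : Z j [:: n.+1] - 1 <= (Z j [:: n] - 1) / 2.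
Proof.
case: j => [|j]; first by rewrite !Z0; lra.
rewrite !Zsplit.
rewrite [1 + _]addrC addrK [1 + _]addrC addrK.
rewrite mulr_suml; apply: ler_sum_nat => i /andP[hi _].
rewrite exprS invfM (_ : Z i [::] = 1) // !mulr1 mulrC; apply: ler_wpM2l.
  by rewrite invr_ge0 exprn_ge0.
rewrite lef_pV2 ?posrE ?ltr0n //; last by rewrite (leq_trans _ hi).
by rewrite ler_nat.
Qed.

Lemma e_iter n j : Z j [:: n.+2] - 1 <= (2^-1)^+n * (Z j [:: 2%N] - 1).
Proof.
elim: n => [|n IH]; first by rewrite expr0 mul1r.
apply: (le_trans (e_step n.+2 j)); rewrite exprS.
move: IH; set P := (2^-1)^+n; set E := Z j [:: 2%N] - 1 => IH.
have : P * E = P * E by [].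
move: (P * E) => PE _.
rewrite -mulrA; move: IH; set PE' := P * E => IH; lra.
Qed.

Lemma Zn_le n j : Z j [:: n.+2] <= 1 + (2^-1)^+n.
Proof.
have h := e_iter n j.
have h2 : Z j [:: 2%N] - 1 <= 1 by have := S_bound R 0 j; rewrite /= expr1; lra.
have h3 : (2^-1 : R)^+n * (Z j [:: 2%N] - 1) <= (2^-1)^+n * 1.
  by apply: ler_wpM2l => //; apply: exprn_ge0; rewrite invr_ge0.
lra.
Qed.

End Aux4.

Section Aux5.
Variable R : realType.
Local Notation Z N s := (zstar_trunc R N s).

Lemma Z1_harm M : Z M [:: 1%N] = series (@harmonic R) M.
Proof.
elim: M => [|M IH]; first by rewrite Z0 /series /= big_geq.
by rewrite ZS IH /series /= big_nat_recr //= expr1 mulr1.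
Qed.

Lemma Z20 k M : Z M [:: k.+1; 0%N] = Z M [:: k].
Proof.
rewrite !Zcons; apply: eq_big_nat => i /andP[hi _].
rewrite Zzero exprSr invfM -mulrA mulVf ?mulr1 //.
by rewrite pnatr_eq0 -lt0n.
Qed.

Lemma zeta_cvgB s (B : R) : (forall N, Z N s <= B) ->
  (fun N => Z N s) @ \oo --> zeta_star R s.
Proof. move=> hB; have := @bnd_cvg R _ _ (Z_nd R s) hB; rewrite /zeta_star. Show. exact. Qed.

Lemma Zle_zetaB s (B : R) N : (forall N, Z N s <= B) -> Z N s <= zeta_star R s.
Proof. move=> hB; exact: (@bnd_le_lim R _ _ (Z_nd R s) hB). Qed.

Lemma zeta_le s (B : R) : (forall N, Z N s <= B) -> zeta_star R s <= B.
Proof. move=> hB; exact: (@bnd_lim_le R _ _ (Z_nd R s) hB). Qed.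

Lemma Zle_zeta s N : admissible s -> Z N s <= zeta_star R s.
Proof. by move=> /(adm_bound R) [B hB]; exact: (@Zle_zetaB s B N hB). Qed.

Lemma adm_2 n : admissible (2%N :: nseq n 1%N).
Proof. by rewrite /admissible /= all_nseq orbT. Qed.

End Aux5.

Section Aux6.
Variable R : realType.
Local Notation Z N s := (zstar_trunc R N s).

Lemma part1 : (fun n => zeta_star R (2%N :: nseq n 1%N)) @ \oo --> +oo.
Proof.
have nd : nondecreasing_seq (series (@harmonic R)).
  by apply: nondecreasing_series => n _ _; rewrite /harmonic /= invr_ge0 ler0n.
have Hh := nondecreasing_dvgn_lt nd (@dvg_harmonic R).
apply/cvgryPge => A.
have [M _ HM] := ((cvgryPge _).1 Hh (A + 1)).
have HA : A < Z M [:: 1%N].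
  by rewrite Z1_harm; have := HM M (leqnn M); rewrite /=; lra.
have Hl : (fun n => Z M (2%N :: nseq n 1%N)) @ \oo --> Z M [:: 1%N].
  rewrite -(Z20 R 1 M).
  exact: (lim_step R 2 (fun n => nseq n 1%N) [:: 0%N] (fun j hj => g_cvg R j hj) M).
apply: filterS (cvgr_gt _ Hl A HA) => n hn.
apply: ltW; apply: lt_le_trans hn _; exact: Zle_zeta (adm_2 n).
Qed.

Lemma part2a ks kr : admissible (ks ++ [:: kr]) ->
  (fun n => zeta_star R (ks ++ kr.+1 :: nseq n 1%N)) @ \oo --> zeta_star R (ks ++ [:: kr]).
Proof.
move=> hadm.
have Ht : forall N, Z N (ks ++ [:: kr]) <= zeta_star R (ks ++ [:: kr]).
  by move=> N; exact: Zle_zeta hadm.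
have H1 : forall n N, Z N (ks ++ kr.+1 :: nseq n 1%N) <= Z N (ks ++ [:: kr]).
  move=> n N; rewrite -[X in _ <= X]mul1r.
  apply: (@Z_lift R ks (kr.+1 :: nseq n 1%N) [:: kr] 1) => // m.
  apply: (Z_inner R) => j hj; rewrite mul1r exprSr invfM -mulrA.
  apply: ler_wpM2l; first by rewrite invr_ge0 exprn_ge0.
  rewrite (_ : Z j [::] = 1) // mulrC ler_pdivrMr ?ltr0n // mul1r; exact: g_le.
have H2 : forall n N, Z N (ks ++ kr.+1 :: nseq n 1%N) <= Z N (ks ++ kr.+1 :: nseq n.+1 1%N).
  move=> n N; rewrite -[X in _ <= X]mul1r.
  apply: (@Z_lift R ks (kr.+1 :: nseq n 1%N) (kr.+1 :: nseq n.+1 1%N) 1) => // m.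
  apply: (Z_inner R) => j hj; rewrite mul1r.
  apply: ler_wpM2l; first by rewrite invr_ge0 exprn_ge0.
  exact: g_monon.
set w := fun n => zeta_star R (ks ++ kr.+1 :: nseq n 1%N).
have wle : forall n, w n <= zeta_star R (ks ++ [:: kr]).
  by move=> n; apply: (zeta_le R) => N; exact: le_trans (H1 n N) (Ht N).
have wnd : nondecreasing_seq w.
  apply/nondecreasing_seqP => n; apply: (zeta_le R) => N.
  apply: le_trans (H2 n N) _.
  exact: (@Zle_zetaB R _ _ N (fun N => le_trans (H1 n.+1 N) (Ht N))).
have cw := @bnd_cvg R _ _ wnd wle.
have h1 : limn w <= zeta_star R (ks ++ [:: kr]) := @bnd_lim_le R _ _ wnd wle.
have h2 : zeta_star R (ks ++ [:: kr]) <= limn w.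
  apply: (cvgr_to_le (@zeta_cvgB R _ _ Ht)); apply: nearW => N.
  have HN := lim_lift R ks kr.+1 (fun n => nseq n 1%N) [:: 0%N] (fun j hj => g_cvg R j hj) N.
  have E : Z N (ks ++ [:: kr.+1; 0%N]) = Z N (ks ++ [:: kr]).
    by apply: (Z_eq R) => m; exact: Z20.
  rewrite -E; apply: (cvgr_to_le HN); apply: nearW => n.
  apply: le_trans (@bnd_le_lim R _ _ wnd wle n).
  exact: (@Zle_zetaB R _ _ N (fun N => le_trans (H1 n N) (Ht N))).
have -> : zeta_star R (ks ++ [:: kr]) = limn w by apply/le_anti; rewrite h1 h2.
exact: cw.
Qed.

Lemma part2b ks kr : admissible (ks ++ [:: kr]) ->
  (fun n => zeta_star R (ks ++ [:: kr; n])) @ \oo --> zeta_star R (ks ++ [:: kr]).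
Proof.
move=> hadm.
have Ht : forall N, Z N (ks ++ [:: kr]) <= zeta_star R (ks ++ [:: kr]).
  by move=> N; exact: Zle_zeta hadm.
have Hlo : forall n N, Z N (ks ++ [:: kr]) <= Z N (ks ++ [:: kr; n]).
  move=> n N; rewrite -[X in _ <= X]mul1r.
  apply: (@Z_lift R ks [:: kr] [:: kr; n] 1) => // m.
  apply: (Z_inner R) => j hj; rewrite mul1r.
  apply: ler_wpM2l; first by rewrite invr_ge0 exprn_ge0.
  exact: Zn_ge1.
have Hup : forall m N, Z N (ks ++ [:: kr; m.+2]) <= (1 + (2^-1)^+m) * Z N (ks ++ [:: kr]).
  move=> m N; apply: (@Z_lift R ks [:: kr; m.+2] [:: kr]).
    by apply: addr_ge0 => //; apply: exprn_ge0; rewrite invr_ge0.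
  move=> M; apply: (Z_inner R) => j hj.
  rewrite (_ : Z j [::] = 1) // mulr1 mulrC; apply: ler_wpM2r.
    by rewrite invr_ge0 exprn_ge0.
  exact: Zn_le.
have Hq : (fun n => (2^-1:R)^+n) @ \oo --> 0.
  by apply: cvg_expr; rewrite ger0_norm; lra.
have Hc : (fun n => 1 + 4 * (2^-1:R)^+n) @ \oo --> (1:R).
  rewrite -[X in _ --> X]addr0 -[X in _ + X](mulr0 4).
  apply: cvgD; first exact: cvg_cst.
  exact: cvgMl_tmp.
have Hh : (fun n => (1 + 4 * (2^-1:R)^+n) * zeta_star R (ks ++ [:: kr])) @ \oo
    --> zeta_star R (ks ++ [:: kr]).
  by rewrite -[X in _ --> X]mul1r; apply: cvgMr_tmp.
apply: (squeeze_cvgr _ (cvg_cst (zeta_star R (ks ++ [:: kr]))) Hh).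
apply: filterS (nbhs_infty_ge 2) => -[|[|m]] // _.
have hc : (1 + 4 * (2^-1:R)^+m.+2) = 1 + (2^-1)^+m by rewrite !exprS; field.
have hc0 : (0:R) <= 1 + (2^-1)^+m.
  by apply: addr_ge0 => //; apply: exprn_ge0; rewrite invr_ge0.
have Bw : forall N, Z N (ks ++ [:: kr; m.+2]) <= (1 + (2^-1)^+m) * zeta_star R (ks ++ [:: kr]).
  by move=> N; apply: le_trans (Hup m N) _; apply: ler_wpM2l.
apply/andP; split.
  apply: (cvgr_to_le (@zeta_cvgB R _ _ Ht)); apply: nearW => N.
  apply: le_trans (Hlo m.+2 N) _; exact: (@Zle_zetaB R _ _ N Bw).
by rewrite hc; exact: (@zeta_le R _ _ Bw).
Qed.

End Aux6.


Theorem lemma3p4 (R : realType) :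
  ((fun n : nat => zeta_star R (2%N :: nseq n 1%N)) @ \oo --> +oo) /\
  (forall (ks : seq nat) (kr : nat), admissible (rcons ks kr) ->
     ((fun n : nat => zeta_star R (rcons ks kr.+1 ++ nseq n 1%N)) @ \oo
        --> zeta_star R (rcons ks kr)) /\
     ((fun n : nat => zeta_star R (rcons (rcons ks kr) n)) @ \oo
        --> zeta_star R (rcons ks kr))).
Proof.
split; first exact: part1.
move=> ks kr hadm; rewrite -cats1 in hadm; rewrite -[rcons ks kr]cats1.
split.
  have -> : (fun n => zeta_star R (rcons ks kr.+1 ++ nseq n 1%N)) =
      (fun n => zeta_star R (ks ++ kr.+1 :: nseq n 1%N)).
    by apply/funext => n; rewrite cat_rcons.
  exact: part2a.
have -> : (fun n => zeta_star R (rcons (ks ++ [:: kr]) n)) =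
    (fun n => zeta_star R (ks ++ [:: kr; n])).
  by apply/funext => n; rewrite -cats1 -catA.
exact: part2b.
Qed.
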